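(* Let $S=\langle P,\varphi\rangle$ be a SUT model, $t$ a strength, $N\ge1$ an integer and $lb$ an integer with $0\le lb<CAN(t,S)$. If $N\ge CAN(t,S)$, then the optimal cost of the Partial MaxSAT instance $PMSat_{CCX}^{N,t,S,lb}$ (defined in the context) is $CAN(t,S)-(lb+1)$; otherwise it is $\infty$.
   Context: A SUT model is $S=\langle P,\varphi\rangle$, where $P$ is a finite set of parameters, each $p\in P$ having a finite nonempty domain $d(p)$, and $\varphi$ is a propositional formula whose atoms have the form $(p=v)$ with $p\in P$, $v\in d(p)$. A test case is a full assignment $A$ giving each $p$ a value in $d(p)$ such that $\varphi$ is true when each atom $(p=v)$ is read as true iff $A(p)=v$; it is assumed that at least one test case exists. Fix a strength $t$ with $1\le t\le|P|$. A $t$-tuple is an assignment of values to exactly $t$ distinct parameters, viewed as a set of pairs $(p,v)$; a test case covers $\tau$ if it assigns $v$ to $p$ for every $(p,v)\in\tau$. A $t$-tuple is allowed if some test case covers it; $\mathcal T_a$ is the set of allowed $t$-tuples. A covering array $CA(N;t,S)$ is a list of $N$ test cases (repetitions allowed) covering every allowed $t$-tuple; $CAN(t,S)$ is the minimum $N$ for which a $CA(N;t,S)$ exists. $[N]=\{1,\dots,N\}$. A (weighted) Partial MaxSAT instance consists of hard constraints and soft clauses $(c,w)$ with positive integer weight $w$; its optimal cost is the minimum, over truth assignments satisfying all hard constraints, of the total weight of falsified soft clauses, and $\infty$ if the hard constraints are unsatisfiable. Variables: $x_{i,p,v}$ ($i\in[N]$, $p\in P$, $v\in d(p)$), $c^i_\tau$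 ($i\in\{0,\dots,N\}$, $\tau\in\mathcal T_a$), $u_i$ ($i\in\{lb+2,\dots,N\}$). Hard constraints of $PMSat_{CCX}^{N,t,S,lb}$: (X) for every $i\in[N]$, $p\in P$: exactly one of $\{x_{i,p,v}:v\in d(p)\}$ is true; (SUTX) for every $i\in[N]$: the formula obtained from $\varphi$ by replacing each atom $(p=v)$ with $x_{i,p,v}$; (CCX) (a) for every $i\in[N]$, $\tau\in\mathcal T_a$, $(p,v)\in\tau$: $c^i_\tau\rightarrow(c^{i-1}_\tau\vee x_{i,p,v})$; (b) for every $\tau\in\mathcal T_a$: the unit clause $c^N_\tau$; (c) for every $\tau\in\mathcal T_a$: $c^N_\tau\rightarrow\neg c^0_\tau$; (BSU) for every $i\in\{lb+2,\dots,N-1\}$: $u_{i+1}\rightarrow u_i$; (CCU) for every $i\in\{lb+2,\dots,N\}$, $\tau\in\mathcal T_a$: $\neg c^{i-1}_\tau\rightarrow u_i$. Soft clauses: $(\neg u_i,1)$ for every $i\in\{lb+2,\dots,N\}$. *)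

(* Defs.v *)
From mathcomp Require Import all_boot.
Set Implicit Arguments. Unset Strict Implicit. Unset Printing Implicit Defensive.

Inductive form (X : Type) : Type :=
| FTrue | FFalse
| FVar of X
| FNot of form X
| FAnd of form X & form X
| FOr of form X & form X
| FImp of form X & form X.
Arguments FTrue {X}. Arguments FFalse {X}.

Fixpoint eval (X : Type) (v : X -> bool) (f : form X) : bool :=
  match f with
  | FTrue => true
  | FFalse => false
  | FVar x => v x
  | FNot g => ~~ eval v g
  | FAnd g h => eval v g && eval v h
  | FOr g h => eval v g || eval v h
  | FImp g h => eval v g ==> eval v h
  end.

Fixpoint fmap (X Y : Type) (s : X -> Y) (f : form X) : form Y :=
  match f with
  | FTrue => FTrue
  | FFalse => FFalse
  | FVar x => FVar (s x)
  | FNot g => FNot (fmap s g)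
  | FAnd g h => FAnd (fmap s g) (fmap s h)
  | FOr g h => FOr (fmap s g) (fmap s h)
  | FImp g h => FImp (fmap s g) (fmap s h)
  end.

Definition bigOr (X : Type) (s : seq (form X)) : form X := foldr (@FOr X) FFalse s.
Definition bigAnd (X : Type) (s : seq (form X)) : form X := foldr (@FAnd X) FTrue s.

Definition exactly_one (X : eqType) (xs : seq X) : form X :=
  bigOr [seq FAnd (FVar x) (bigAnd [seq FNot (FVar y) | y <- xs & y != x]) | x <- xs].

Record pmsat (X : finType) := PMSat {
  hard : seq (form X);
  soft : seq (form X * nat)
}.

Definition sat_hard (X : finType) (I : pmsat X) (a : {ffun X -> bool}) : bool :=
  all (eval a) (hard I).

Definition cost (X : finType) (I : pmsat X) (a : {ffun X -> bool}) : nat :=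
  \sum_(s <- soft I | ~~ eval a s.1) s.2.

(* optimal cost; None stands for infinity (hard constraints unsatisfiable) *)
Definition opt_cost (X : finType) (I : pmsat X) : option nat :=
  match [pick a | sat_hard I a] with
  | Some a0 => Some (cost I [arg min_(a < a0 | sat_hard I a) cost I a])
  | None => None
  end.

(* SUT models <P, phi>: P a finite type of parameters, D p the finite
   domain of p, atoms (p = v) are the pairs {p : P & D p}.              *)
Section SUT.
Variables (P : finType) (D : P -> finType).

Definition atom := {p : P & D p}.
Definition assignment := {dffun forall p : P, D p}.

Definition assigns (A : assignment) (a : atom) : bool := a == Tagged D (A (tag a)).

Definition is_test (phi : form atom) (A : assignment) : bool := eval (assigns A) phi.

Definition is_ttuple (t : nat) (tau : {set atom}) : bool :=
  (#|tau| == t) && [forall a in tau, forall b in tau, (tag a == tag b) ==> (a == b)].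

Definition covers (A : assignment) (tau : {set atom}) : bool :=
  [forall a in tau, assigns A a].

Definition allowed (phi : form atom) (t : nat) (tau : {set atom}) : bool :=
  is_ttuple t tau && [exists A, is_test phi A && covers A tau].

Definition hasCA (phi : form atom) (t N : nat) : bool :=
  [exists C : {ffun 'I_N -> assignment},
    [forall i, is_test phi (C i)] &&
    [forall tau : {set atom}, allowed phi t tau ==> [exists i, covers (C i) tau]]].

Lemma hasCA_exists (phi : form atom) (t : nat) : exists N, hasCA phi t N.
Proof.
pose AS := [set tau | allowed phi t tau].
exists #|AS|.
case: (pickP (is_test phi)) => [A0 HA0|Hno].
- apply/existsP.
  exists [ffun i => odflt A0 [pick A | is_test phi A && covers A (enum_val i)]].
  apply/andP; split.
  + apply/forallP=> i; rewrite ffunE.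
    by case: pickP => [A /andP[]|] //=.
  + apply/forallP=> tau; apply/implyP=> Ht.
    have HtA : tau \in AS by rewrite inE.
    apply/existsP; exists (enum_rank_in HtA tau); rewrite ffunE enum_rankK_in //.
    case: pickP => [A /andP[] //|Hn] /=.
    move: Ht => /andP[_ /existsP[A HA]]; by move: (Hn A); rewrite HA.
- have -> : #|AS| = 0.
    apply/eqP; rewrite cards_eq0; apply/eqP/setP=> tau; rewrite !inE.
    apply/negbTE/negP=> /andP[_ /existsP[A /andP[HA _]]].
    by move: (Hno A); rewrite HA.
  apply/existsP; exists (ffun0 (card_ord 0)).
  apply/andP; split; first by apply/forallP=> -[].
  apply/forallP=> tau; apply/implyP=> Ht.
  by move: Ht => /andP[_ /existsP[A /andP[HA _]]]; move: (Hno A); rewrite HA.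
Qed.

Definition CAN (phi : form atom) (t : nat) : nat := ex_minn (hasCA_exists phi t).

End SUT.

Section CCX.
Variables (P : finType) (D : P -> finType) (phi : form (atom D)) (t N lb : nat).

Definition Ta : finType := {tau : {set atom D} | allowed phi t tau}.

(* ambient variable type; indices range over 'I_N.+1 = {0,...,N}:
   inl (inl (i, (p,v))) = x_{i,p,v}   (only used for 1 <= i <= N)
   inl (inr (i, tau))   = c^i_tau     (0 <= i <= N)
   inr i                = u_i         (only used for lb+2 <= i <= N) *)
Definition ccx_var : finType :=
  ((('I_N.+1 * atom D) + ('I_N.+1 * Ta)) + 'I_N.+1)%type.

Definition xv (i : 'I_N.+1) (a : atom D) : form ccx_var := FVar (inl (inl (i, a))).
Definition cv (i : 'I_N.+1) (tau : Ta) : form ccx_var := FVar (inl (inr (i, tau))).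
Definition uv (i : 'I_N.+1) : form ccx_var := FVar (inr i).

Definition rows : seq 'I_N.+1 := [seq i : 'I_N.+1 <- enum 'I_N.+1 | 0 < i].
Definition prev (i : 'I_N.+1) : 'I_N.+1 := inord i.-1.
Definition urange : seq 'I_N.+1 := [seq i : 'I_N.+1 <- enum 'I_N.+1 | lb.+2 <= i].

Definition hard_X : seq (form ccx_var) :=
  [seq exactly_one [seq inl (inl (i, Tagged D v)) : ccx_var | v <- enum (D p)]
  | i <- rows, p <- enum P].

Definition hard_SUTX : seq (form ccx_var) :=
  [seq fmap (fun a => inl (inl (i, a)) : ccx_var) phi | i <- rows].

Definition hard_CCXa : seq (form ccx_var) :=
  flatten [seq [seq FImp (cv i tau) (FOr (cv (prev i) tau) (xv i a)) | a <- enum (val tau)]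
          | i <- rows, tau <- enum Ta].

Definition hard_CCXb : seq (form ccx_var) := [seq cv ord_max tau | tau <- enum Ta].

Definition hard_CCXc : seq (form ccx_var) :=
  [seq FImp (cv ord_max tau) (FNot (cv ord0 tau)) | tau <- enum Ta].

Definition hard_BSU : seq (form ccx_var) :=
  [seq FImp (uv (inord i.+1)) (uv i) | i : 'I_N.+1 <- urange & i < N].

Definition hard_CCU : seq (form ccx_var) :=
  [seq FImp (FNot (cv (prev i) tau)) (uv i) | i <- urange, tau <- enum Ta].

Definition pmsat_ccx : pmsat ccx_var :=
  {| hard := hard_X ++ hard_SUTX ++ hard_CCXa ++ hard_CCXb ++ hard_CCXc
             ++ hard_BSU ++ hard_CCU;
     soft := [seq (FNot (uv i), 1) | i <- urange] |}.

End CCX.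

(* Main.v *)
Require Import Defs.
From mathcomp Require Import all_boot zify.
Set Implicit Arguments. Unset Strict Implicit. Unset Printing Implicit Defensive.

Lemma eval_ext (X : Type) (v w : X -> bool) (f : form X) :
  v =1 w -> eval v f = eval w f.
Proof. move=> E; elim: f => //= [g->|g-> h->|g-> h->|g-> h->] //. Qed.

Lemma eval_fmap (X Y : Type) (s : X -> Y) (v : Y -> bool) (f : form X) :
  eval v (fmap s f) = eval (fun x => v (s x)) f.
Proof. by elim: f => //= [g->|g-> h->|g-> h->|g-> h->]. Qed.

Lemma eval_bigOr (X : Type) (v : X -> bool) s : eval v (bigOr s) = has (eval v) s.
Proof. by elim: s => //= f s ->. Qed.

Lemma eval_bigAnd (X : Type) (v : X -> bool) s : eval v (bigAnd s) = all (eval v) s.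
Proof. by elim: s => //= f s ->. Qed.

Lemma eval_exactly_one (X : eqType) (v : X -> bool) (xs : seq X) :
  eval v (exactly_one xs) =
  has (fun x => v x && all (fun y => ~~ v y) [seq y <- xs | y != x]) xs.
Proof.
rewrite /exactly_one eval_bigOr has_map; apply: eq_has => x /=.
by rewrite eval_bigAnd all_map.
Qed.

Lemma all_flatten' (T : Type) (p : pred T) (ss : seq (seq T)) :
  all p (flatten ss) = all (all p) ss.
Proof. by elim: ss => //= s ss IH; rewrite all_cat IH. Qed.

Lemma count_sub (T : eqType) (p1 p2 : pred T) (s : seq T) :
  (forall x, x \in s -> p1 x -> p2 x) -> count p1 s <= count p2 s.
Proof.
elim: s => //= x s IH H.
have H' : forall y, y \in s -> p1 y -> p2 y by move=> y ys; apply: H; rewrite inE ys orbT.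
apply: leq_add; last exact: IH.
by case E: (p1 x) => //=; rewrite (H x (mem_head _ _) E).
Qed.

Lemma count_iota_int a b m :
  count (fun n => a <= n <= b) (iota 0 m) = minn b.+1 m - a.
Proof.
elim: m => [|m IH]; first by rewrite minn0.
rewrite -addn1 iotaD count_cat IH /= add0n addn0.
case: (leqP a m) => Ham; case: (leqP m b) => Hmb /=.
- by rewrite !minnE; lia.
- by rewrite !minnE; lia.
- by rewrite !minnE; lia.
- by rewrite !minnE; lia.
Qed.

Lemma eq_Tag (I : eqType) (T_ : I -> eqType) (i : I) (x y : T_ i) :
  (Tagged T_ x == Tagged T_ y) = (x == y).
Proof.
by apply/eqP/eqP => [H|->]; [exact: eq_from_Tagged H|].
Qed.

Section Main.
Variables (P : finType) (D : P -> finType) (phi : form (atom D)) (t N lb : nat).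
Local Notation V := (ccx_var phi t N).
Local Notation I := (pmsat_ccx phi t N lb).
Local Notation TA := (Ta phi t).
Definition X_ (i : 'I_N.+1) (x : atom D) : V := inl (inl (i, x)).
Definition C_ (i : 'I_N.+1) (tau : TA) : V := inl (inr (i, tau)).
Definition U_ (i : 'I_N.+1) : V := inr i.

Lemma mem_rows (i : 'I_N.+1) : (i \in rows N) = (0 < i).
Proof. by rewrite mem_filter mem_enum andbT. Qed.

Lemma mem_urange (i : 'I_N.+1) : (i \in urange N lb) = (lb.+2 <= i).
Proof. by rewrite mem_filter mem_enum andbT. Qed.

Section Sat.
Variable a : {ffun V -> bool}.
Hypothesis Ha : sat_hard I a.

Let Hall : [/\ all (eval a) (hard_X phi t N), all (eval a) (hard_SUTX phi t N),
   all (eval a) (hard_CCXa phi t N), all (eval a) (hard_CCXb phi t N) &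
   [/\ all (eval a) (hard_CCXc phi t N), all (eval a) (hard_BSU phi t N lb)
   & all (eval a) (hard_CCU phi t N lb)]].
Proof. by move: Ha; rewrite /sat_hard /= !all_cat => /and5P[? ? ? ? /and3P[? ? ?]]. Qed.

Lemma satX (i : 'I_N.+1) (p : P) : 0 < i ->
  eval a (exactly_one [seq X_ i (Tagged D v) | v <- enum (D p)]).
Proof.
move=> Hi; case: Hall => H _ _ _ _.
by move/all_allpairsP: H; apply; rewrite ?mem_rows ?mem_enum.
Qed.

Lemma satSUTX (i : 'I_N.+1) : 0 < i -> eval a (fmap (X_ i) phi).
Proof.
move=> Hi; case: Hall => _ H _ _ _.
by move: H; rewrite all_map => /allP; apply; rewrite mem_rows.
Qed.

Lemma satCCXa (i : 'I_N.+1) (tau : TA) (x : atom D) : 0 < i -> x \in val tau ->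
  a (C_ i tau) -> a (C_ (Defs.prev i) tau) || a (X_ i x).
Proof.
move=> Hi Hx; case: Hall => _ _ H _ _.
move: H; rewrite /hard_CCXa all_flatten' => /all_allpairsP H.
have := H i tau; rewrite mem_rows mem_enum => /(_ Hi isT).
rewrite all_map => /allP /(_ x).
by rewrite mem_enum => /(_ Hx) /= /implyP.

Qed.

Lemma satCCXbc (tau : TA) : a (C_ ord_max tau) && ~~ a (C_ ord0 tau).
Proof.
case: Hall => _ _ _ Hb [Hc _ _].
have Ht : tau \in Finite.enum TA by rewrite -enumT mem_enum.
move: Hb Hc; rewrite !all_map => /allP /(_ tau Ht) Hb /allP /(_ tau Ht) /= Hc.
by rewrite /= in Hb; rewrite /C_ Hb; rewrite Hb in Hc.
Qed.

Lemma satCCU (i : 'I_N.+1) (tau : TA) : lb.+2 <= i ->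
  ~~ a (C_ (Defs.prev i) tau) -> a (U_ i).
Proof.
move=> Hi; case: Hall => _ _ _ _ [_ _ H].
move/all_allpairsP: H => /(_ i tau); rewrite mem_urange mem_enum => /(_ Hi isT) /=.
by move=> H1 H2; rewrite H2 in H1.
Qed.


Variable A0 : assignment D.

Definition row (i : 'I_N.+1) : assignment D :=
  @finfun P D (fun p => odflt (A0 p) [pick v | a (X_ i (Tagged D v))]).

Lemma row_assigns (i : 'I_N.+1) (x : atom D) : 0 < i -> assigns (row i) x = a (X_ i x).
Proof.
move=> Hi; case: x => p v; rewrite /assigns /= ffunE eq_Tag.
have := satX p Hi; rewrite eval_exactly_one => /hasP [y /mapP [w _ ->] /andP [Hw Hall']].
have Hu : forall u, a (X_ i (Tagged D u)) = (u == w).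
  move=> u; case: (eqVneq u w) => [->|Huw]; first exact: Hw.
  apply/negbTE; move/allP: Hall'; apply.
  rewrite mem_filter; apply/andP; split.
    apply: contraNN Huw => /eqP H; apply/eqP; apply: (@eq_from_Tagged P (fun q => D q) p).
    exact: (congr1 (fun z : V => match z with inl (inl (_, x)) => x | _ => Tagged D w end) H).
  by apply: map_f; rewrite mem_enum.
case: pickP => [u Hu'|Hn] /=.
  by rewrite Hu; move: Hu'; rewrite Hu => /eqP ->.
by move: (Hn w); rewrite Hw.
Qed.

Lemma row_test (i : 'I_N.+1) : 0 < i -> is_test phi (row i).
Proof.
move=> Hi; rewrite /is_test; have := satSUTX Hi; rewrite eval_fmap.
by rewrite (@eval_ext _ _ (assigns (row i))) // => x; rewrite row_assigns.
Qed.

Lemma cover (n : nat) (Hn : n < N.+1) (tau : TA) : a (C_ (Ordinal Hn) tau) ->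
  exists2 j : 'I_N.+1, 0 < j <= n & covers (row j) (val tau).
Proof.
elim: n Hn => [|n IH] Hn.
  have -> : Ordinal Hn = ord0 by apply: val_inj.
  by move/andP: (satCCXbc tau) => [_ /negP].
move=> Hc.
have Hi : 0 < Ordinal Hn by [].
have Ep : Defs.prev (Ordinal Hn) = Ordinal (ltnW Hn).
  by apply: val_inj; rewrite /= inordK // ltnW.
case: (boolP (a (C_ (Ordinal (ltnW Hn)) tau))) => Hc'.
  have [j Hj Hcov] := IH _ Hc'; exists j => //.
  by move/andP: Hj => [-> /= Hj]; rewrite ltnW.
exists (Ordinal Hn); first by rewrite /= leqnn.
apply/forallP => x; apply/implyP => Hx; rewrite row_assigns //.
by have := satCCXa Hi Hx Hc; rewrite Ep (negbTE Hc').
Qed.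

Lemma prefix_CA (i : 'I_N.+1) : (forall tau : TA, a (C_ i tau)) -> hasCA phi t i.
Proof.
case: i => n Hn H /=.
apply/existsP; exists [ffun j : 'I_n => row (inord j.+1)]; apply/andP; split.
  apply/forallP => j; rewrite ffunE; apply: row_test.
  by rewrite inordK // (leq_ltn_trans _ Hn) // (ltn_ord j).
apply/forallP => tau; apply/implyP => Hal.
have [j /andP [Hj0 Hjn] Hcov] := cover (H (exist _ tau Hal)).
have Hjn' : j.-1 < n by rewrite prednK.
apply/existsP; exists (Ordinal Hjn'); rewrite ffunE.
suff -> : inord (Ordinal Hjn').+1 = j :> 'I_N.+1 by [].
by apply: val_inj; rewrite /= prednK // inordK // ltn_ord.
Qed.

End Sat.

Lemma CAN_le m : hasCA phi t m -> CAN phi t <= m.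
Proof. by rewrite /CAN; case: ex_minnP => K _ Hmin; apply: Hmin. Qed.

Lemma CAN_has : hasCA phi t (CAN phi t).
Proof. by rewrite /CAN; case: ex_minnP. Qed.

Lemma cost_count (a : {ffun V -> bool}) :
  cost I a = count (fun i => a (U_ i)) (urange N lb).
Proof.
rewrite /cost /= big_map -sum1_count.
by apply: eq_bigl => i /=; rewrite negbK.
Qed.

Lemma count_urange K : K <= N ->
  count (fun i : 'I_N.+1 => i <= K) (urange N lb) = K - lb.+1.
Proof.
move=> HK; rewrite /urange count_filter.
transitivity (count (fun n => lb.+2 <= n <= K) (map val (enum 'I_N.+1))).
  by rewrite count_map; apply: eq_count => i /=; rewrite andbC.
by rewrite val_enum_ord count_iota_int (minn_idPl _) ?subSS.
Qed.

Section Sat2.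
Variable a : {ffun V -> bool}.
Hypothesis Ha : sat_hard I a.
Variable A0 : assignment D.

Lemma sat_CAN_le : CAN phi t <= N.
Proof.
apply: (@CAN_le (@ord_max N)); apply: (prefix_CA Ha A0) => tau.
by case/andP: (satCCXbc Ha tau).
Qed.

Lemma sat_u (i : 'I_N.+1) : lb.+2 <= i -> i <= CAN phi t -> a (U_ i).
Proof.
move=> Hi HiK; case: (boolP (a (U_ i))) => // Hu.
have H : forall tau, a (C_ (Defs.prev i) tau).
  by move=> tau; apply/negPn/negP => Hn; rewrite (satCCU Ha Hi Hn) in Hu.
have := CAN_le (prefix_CA Ha A0 H).
rewrite /Defs.prev inordK; last by rewrite (leq_ltn_trans (leq_pred i)).
move=> H2; have := leq_trans HiK H2.
by case: (nat_of_ord i) Hi => // k _ /=; rewrite ltnn.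
Qed.

Lemma cost_ge : CAN phi t - lb.+1 <= cost I a.
Proof.
rewrite cost_count -count_urange; last exact: sat_CAN_le.
apply: count_sub => i; rewrite mem_urange => Hi HiK; exact: sat_u.
Qed.
End Sat2.

Section Build.
Variable C : {ffun 'I_(CAN phi t) -> assignment D}.
Hypothesis HCt : forall j, is_test phi (C j).
Hypothesis HCc : forall tau, allowed phi t tau -> exists j, covers (C j) tau.
Hypothesis HK : 0 < CAN phi t.
Hypothesis HKN : CAN phi t <= N.
Local Notation K := (CAN phi t).

Definition j0 : 'I_K := Ordinal HK.
Definition R (i : nat) : assignment D := C (insubd j0 (minn i K).-1).

Definition ast : {ffun V -> bool} := [ffun v : V =>
  match v with
  | inl (inl (i, x)) => assigns (R i) x
  | inl (inr (i, tau)) => [exists j : 'I_N.+1, (0 < j <= i) && covers (R j) (val tau)]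
  | inr i => i <= K
  end].

Lemma R_cov (tau : TA) : exists2 j : 'I_N.+1, 0 < j <= K & covers (R j) (val tau).
Proof.
have [k Hk] := HCc (valP tau).
have Hk1 : k.+1 < N.+1 by rewrite ltnS (leq_trans (ltn_ord k)).
exists (Ordinal Hk1); first by rewrite /= (ltn_ord k).
rewrite /R /= (minn_idPl (ltn_ord k)) /=.
suff -> : insubd j0 k = k by [].
by apply: val_inj; rewrite insubdK //; exact: ltn_ord.
Qed.

Lemma ast_sat : sat_hard I ast.
Proof.
rewrite /sat_hard /= !all_cat; apply/and5P; split; last apply/and3P; try split.
- apply/all_allpairsP => i p Hi _; rewrite eval_exactly_one.
  apply/hasP; exists (X_ i (Tagged D (R i p))); first by apply: map_f; rewrite mem_enum.
  apply/andP; split; first by rewrite ffunE /assigns /= eqxx.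
  apply/allP => y; rewrite mem_filter => /andP [Hy /mapP [v _ Ev]].
  rewrite Ev ffunE /assigns /= eq_Tag; rewrite Ev in Hy.
  by apply: contraNN Hy => /eqP ->.
- rewrite all_map; apply/allP => i Hi /=; rewrite eval_fmap.
  rewrite (@eval_ext _ _ (assigns (R i))); [exact: HCt|by move=> x; rewrite ffunE].
- rewrite all_flatten'; apply/all_allpairsP => i tau Hi _; rewrite all_map.
  apply/allP => x Hx /=; rewrite !ffunE /=.
  apply/implyP => /existsP [j /andP [/andP [Hj0 Hji] Hcov]].
  case: (ltnP j i) => Hlt.
    apply/orP; left; apply/existsP; exists j; rewrite Hcov Hj0 /=.
    by rewrite inordK ?(leq_ltn_trans (leq_pred i)) // -ltnS prednK // (leq_trans _ Hlt).
  have Eji : j = i by apply: val_inj; apply/eqP; rewrite eqn_leq Hji.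
  rewrite -Eji; apply/orP; right.
  have Hx' : x \in val tau by move: Hx; rewrite mem_enum.
  by move/forallP: Hcov => /(_ x); rewrite Hx'.
- rewrite all_map; apply/allP => tau _ /=; rewrite ffunE /=.
  have [j /andP [Hj0 HjK] Hcov] := R_cov tau.
  by apply/existsP; exists j; rewrite Hcov Hj0 /= (leq_trans HjK HKN).
- rewrite all_map; apply/allP => tau _ /=; rewrite !ffunE /=.
  apply/implyP => _; apply/negP => /existsP [j /andP [/andP [Hj0 Hj1] _]].
  by move: Hj1; rewrite leqNgt Hj0.
- rewrite all_map; apply/allP => i; rewrite mem_filter => /andP [HiN _] /=.
  by rewrite !ffunE /= inordK //; apply/implyP => H; apply: ltnW.
- apply/all_allpairsP => i tau Hi _ /=; rewrite !ffunE /=.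
  apply/implyP => Hn; rewrite leqNgt; apply/negP => HKi; apply: (negP Hn).
  have [j /andP [Hj0 HjK] Hcov] := R_cov tau.
  apply/existsP; exists j; rewrite Hcov Hj0 /= inordK; last first.
    by rewrite (leq_ltn_trans (leq_pred i)).
  by rewrite -ltnS prednK ?(leq_ltn_trans HjK) // (leq_ltn_trans _ HKi).
Qed.

Lemma ast_cost : cost I ast = K - lb.+1.
Proof.
rewrite cost_count -(count_urange HKN); apply: eq_count => i.
by rewrite ffunE.
Qed.
End Build.
End Main.

Theorem proposition4 (P : finType) (D : P -> finType) (phi : form (atom D))
    (t N lb : nat) :
  (forall p : P, 0 < #|D p|) ->
  (exists A : assignment D, is_test phi A) ->
  1 <= t <= #|P| ->
  1 <= N ->
  lb < CAN phi t ->
  opt_cost (pmsat_ccx phi t N lb) =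
    if CAN phi t <= N then Some (CAN phi t - lb.+1) else None.
Proof.
move=> _ [A0 HA0] _ _ Hlb.
have HK : 0 < CAN phi t by apply: leq_ltn_trans Hlb.
have := CAN_has phi t => /existsP [C /andP [/forallP HCt /forallP HCc']].
have HCc : forall tau, allowed phi t tau -> exists j, covers (C j) tau.
  by move=> tau Hal; move/implyP: (HCc' tau) => /(_ Hal) /existsP.
rewrite /opt_cost; case: pickP => [a0 Ha0|Hnone].
  have HKN := sat_CAN_le Ha0 A0; rewrite HKN; congr Some.
  case: arg_minnP => // b Hb Hmin; apply/eqP; rewrite eqn_leq; apply/andP; split.
    by rewrite -(ast_cost lb C HK HKN) Hmin // (ast_sat lb HCt HCc HK HKN).
  exact: cost_ge Hb A0.
case: ifP => // HKN.
by move: (Hnone (ast N C HK)); rewrite (ast_sat lb HCt HCc HK HKN).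
Qed.
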